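(* Let $G\subset\mathbb{R}^n$ be a convex body and $u\in\mathbb{S}^{n-1}$. For $t>0$ let $$C_t=\{x\in G: u\cdot x\ge h_G(u)-t\},\qquad S_t=G\cap\{x\in\mathbb{R}^n: u\cdot x=h_G(u)-t\}.$$ Then: (1) $d_{\mathcal H}(C_t,S_t)\ge t$; (2) $d_{\mathcal H}(C_t,S_t)\to 0$ as $t\to 0$; (3) $\mathrm{Vol}(G+C_t)-\mathrm{Vol}(G+S_t)\le 2^n\,\mathrm{Vol}(C_t)$.
   Context: A convex body is a compact convex set with non-empty interior. $h_G(u)=\max\{y\cdot u: y\in G\}$ is the support function. $d_{\mathcal H}$ is the Hausdorff distance, sums are Minkowski sums and $\mathrm{Vol}$ is Lebesgue measure. *)

(* Defs.v *)
From HB Require Import structures.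
From mathcomp Require Import all_boot all_order all_algebra.
From mathcomp Require Import all_classical all_reals all_analysis.
Set Implicit Arguments. Unset Strict Implicit. Unset Printing Implicit Defensive.
Import Order.TTheory GRing.Theory Num.Theory numFieldNormedType.Exports.
Local Open Scope classical_set_scope.
Local Open Scope ring_scope.

Section Defs.
Variables (R : realType) (n : nat).
Local Notation V := 'rV[R]_n.

Definition dotp (x y : V) : R := \sum_(i < n) x 0 i * y 0 i.
Definition enorm (x : V) : R := Num.sqrt (dotp x x).

Definition convex (A : set V) : Prop :=
  forall x y (l : R), A x -> A y -> 0 <= l -> l <= 1 -> A (l *: x + (1 - l) *: y).
Definition convex_body (G : set V) : Prop :=
  convex G /\ compact G /\ (interior G !=set0).

Definition support_fun (G : set V) (u : V) : R := sup [set dotp y u | y in G].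

Definition minkowski_sum (A B : set V) : set V := [set a + b | a in A & b in B].

(* Euclidean distance from a point to a set (+oo for the empty set) and
   Hausdorff distance, valued in the extended reals *)
Definition dist_pt (x : V) (B : set V) : \bar R :=
  ereal_inf [set (enorm (x - b))%:E | b in B].
Definition hausdorff (A B : set V) : \bar R :=
  Order.max (ereal_sup [set dist_pt a B | a in A])
            (ereal_sup [set dist_pt b A | b in B]).

(* Lebesgue (outer) measure on R^n: infimum of the total volume of countable
   covers by closed boxes [a_k, b_k] with a_k <= b_k coordinatewise. *)
Definition box (a b : V) : set V := [set x | forall i, a 0 i <= x 0 i <= b 0 i].
Definition box_vol (a b : V) : R := \prod_(i < n) (b 0 i - a 0 i).
Definition vol (A : set V) : \bar R :=
  ereal_inf [set (\sum_(k <oo) (box_vol (ab k).1 (ab k).2)%:E)%E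
            | ab in [set ab : nat -> V * V |
                     (forall k i, (ab k).1 0 i <= (ab k).2 0 i) /\
                     A `<=` \bigcup_k box (ab k).1 (ab k).2]].

Definition cap_set (G : set V) (u : V) (t : R) : set V :=
  [set x | G x /\ support_fun G u - t <= dotp u x].
Definition sect_set (G : set V) (u : V) (t : R) : set V :=
  [set x | G x /\ dotp u x = support_fun G u - t].
End Defs.

(* Main.v *)
Require Import Defs.
From HB Require Import structures.
From mathcomp Require Import all_boot all_order all_algebra.
From mathcomp Require Import all_classical all_reals all_analysis.
Import Order.TTheory GRing.Theory Num.Theory numFieldNormedType.Exports.
Local Open Scope classical_set_scope.
Local Open Scope ring_scope.
From mathcomp Require Import lra ring.
Set Implicit Arguments. Unset Strict Implicit. Unset Printing Implicit Defensive.

Lemma dotpC (R : realType) n (x y : 'rV[R]_n) : dotp x y = dotp y x.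
Proof. by apply: eq_bigr => i _; rewrite mulrC. Qed.

Lemma dotpDl (R : realType) n (x y z : 'rV[R]_n) : dotp (x + y) z = dotp x z + dotp y z.
Proof. by rewrite /dotp -big_split; apply: eq_bigr => i _; rewrite !mxE mulrDl. Qed.

Lemma dotpZl (R : realType) n a (x y : 'rV[R]_n) : dotp (a *: x) y = a * dotp x y.
Proof. by rewrite /dotp mulr_sumr; apply: eq_bigr => i _; rewrite !mxE mulrA. Qed.

Lemma dotpNl (R : realType) n (x y : 'rV[R]_n) : dotp (- x) y = - dotp x y.
Proof. by rewrite -scaleN1r dotpZl mulN1r. Qed.

Lemma dotpBl (R : realType) n (x y z : 'rV[R]_n) : dotp (x - y) z = dotp x z - dotp y z.
Proof. by rewrite dotpDl dotpNl. Qed.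

Lemma dotpDr (R : realType) n (x y z : 'rV[R]_n) : dotp z (x + y) = dotp z x + dotp z y.
Proof. by rewrite dotpC dotpDl !(dotpC z). Qed.

Lemma dotpZr (R : realType) n a (x y : 'rV[R]_n) : dotp y (a *: x) = a * dotp y x.
Proof. by rewrite dotpC dotpZl dotpC. Qed.

Lemma dotpBr (R : realType) n (x y z : 'rV[R]_n) : dotp z (x - y) = dotp z x - dotp z y.
Proof. by rewrite dotpC dotpBl !(dotpC z). Qed.

Lemma dotp_ge0 (R : realType) n (x : 'rV[R]_n) : 0 <= dotp x x.
Proof. by apply: sumr_ge0 => i _; rewrite -expr2 sqr_ge0. Qed.

Lemma enorm_ge0 (R : realType) n (x : 'rV[R]_n) : 0 <= enorm x.
Proof. exact: sqrtr_ge0. Qed.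

Lemma enormZ (R : realType) n a (x : 'rV[R]_n) : enorm (a *: x) = `|a| * enorm x.
Proof.
by rewrite /enorm dotpZl dotpZr mulrA -expr2 sqrtrM ?sqrtr_sqr // sqr_ge0.
Qed.

Lemma enorm0 (R : realType) n : enorm (0 : 'rV[R]_n) = 0.
Proof. by rewrite -(scale0r (0 : 'rV[R]_n)) enormZ normr0 mul0r. Qed.

Lemma dotpuu (R : realType) n (u : 'rV[R]_n) : enorm u = 1 -> dotp u u = 1.
Proof. by move=> h; rewrite -(sqr_sqrtr (dotp_ge0 u)) -/(enorm u) h expr1n. Qed.

Lemma cauchy_schwarz (R : realType) n (u v : 'rV[R]_n) :
  enorm u = 1 -> dotp u v <= enorm v.
Proof.
move=> hu; set c := dotp u v.
have h0 := dotp_ge0 (v - c *: u).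
rewrite !(dotpBl, dotpBr, dotpZl, dotpZr) (dotpuu hu) (dotpC v u) -/c in h0.
have hc : c ^+ 2 <= dotp v v by rewrite expr2; lra.
apply: (le_trans (ler_norm c)); rewrite -sqrtr_sqr /enorm ler_sqrt //; exact: dotp_ge0.
Qed.

Lemma coord_le_mx_norm (R : realType) n (x : 'rV[R]_n) i : `|x 0 i| <= mx_norm x.
Proof. by rewrite mx_normrE; apply: (le_bigmax _ (fun ij => `|x ij.1 ij.2|) (0, i)). Qed.

Lemma sqr_coord_le (R : realType) n (x : 'rV[R]_n) i : x 0 i ^+ 2 <= dotp x x.
Proof.
rewrite /dotp (bigD1 i) //= expr2 lerDl; apply: sumr_ge0 => j _; by rewrite -expr2 sqr_ge0.
Qed.

Lemma enorm_le_mx (R : realType) n (x : 'rV[R]_n) : enorm x <= n%:R * mx_norm x.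
Proof.
set M := mx_norm x.
have M0 : 0 <= M by have := normr_ge0 x.
have h1 : dotp x x <= (n%:R * M) ^+ 2.
  apply: (@le_trans _ _ (\sum_(i < n) M ^+ 2)).
    apply: ler_sum => i _; have hi := coord_le_mx_norm x i.
    apply: (le_trans (ler_norm _)); rewrite normrM expr2.
    by apply: ler_pM; rewrite ?normr_ge0.
  rewrite big_const_ord iter_addr_0 exprMn -[_ *+ n]mulr_natl ler_wpM2r ?sqr_ge0 //.
  case: n {x M M0} => [|k]; first by rewrite expr0n.
  by rewrite -natrX ler_nat expnS leq_pmulr.
rewrite /enorm -(@ger0_norm _ (n%:R * M)) ?mulr_ge0 // -sqrtr_sqr ler_sqrt // ?sqr_ge0 //.
Qed.

Lemma mx_norm_unit (R : realType) n (u : 'rV[R]_n) : enorm u = 1 -> mx_norm u <= 1.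
Proof.
move=> hu; rewrite mx_normrE; apply: bigmax_le => // -[i j] _ /=.
rewrite (ord1 i) -sqrtr_sqr -sqrtr1 ler_sqrt //.
by rewrite -(dotpuu hu) sqr_coord_le.
Qed.

Lemma cb_bounded (R : realType) n (G : set 'rV[R]_n) :
  convex_body G -> exists M, forall x, G x -> mx_norm x <= M.
Proof.
move=> [_ [cG _]]; have [M [_ hM]] := compact_bounded cG.
exists (M + 1) => x Gx; have := hM (M + 1); rewrite ltrDl ltr01 => /(_ isT x Gx); done.
Qed.

Lemma supp_facts (R : realType) n (G : set 'rV[R]_n) u :
  convex_body G -> enorm u = 1 ->
  [/\ (forall x, G x -> dotp u x <= support_fun G u),
      (forall e, 0 < e -> exists2 x, G x & support_fun G u - e < dotp u x)
    & exists2 x0, G x0 & dotp u x0 < support_fun G u].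
Proof.
move=> cbG hu; have [Mb hMb] := cb_bounded cbG.
have [_ [_ [x ix]]] := cbG.
have Gx : G x := nbhs_singleton ix.
have hs : has_sup [set dotp y u | y in G].
  split; first by exists (dotp x u), x.
  exists (n%:R * Mb) => _ [y Gy <-]; rewrite dotpC.
  apply: (le_trans (cauchy_schwarz _ hu)); apply: (le_trans (enorm_le_mx y)).
  by rewrite ler_wpM2l // hMb.
have hub : forall y, G y -> dotp u y <= support_fun G u.
  by move=> y Gy; rewrite dotpC; apply: sup_ubound => //; [case: hs | exists y].
split => //.
  move=> e e0; have [_ [y Gy <-] hy] := sup_adherent e0 hs.
  by exists y => //; rewrite dotpC.
have /nbhs_ballP [e /= e0 hB] := ix.
have Gy : G (x - (e / 2) *: u).
  apply: hB; rewrite -ball_normE /ball_ /= opprB addrC addrNK normrZ.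
  rewrite gtr0_norm ?divr_gt0 //.
  apply: (@le_lt_trans _ _ (e / 2)); last by lra.
  have he2 : 0 <= e / 2 by lra.
  rewrite -[leRHS]mulr1 ler_wpM2l //; exact: (mx_norm_unit hu).
exists (x - (e / 2) *: u) => //.
rewrite dotpBr dotpZr (dotpuu hu) mulr1; apply: (lt_le_trans _ (hub x Gx)); lra.
Qed.

Lemma part1 (R : realType) n (G : set 'rV[R]_n) u :
  convex_body G -> enorm u = 1 ->
  forall t : R, 0 < t -> (t%:E <= hausdorff (cap_set G u t) (sect_set G u t))%E.
Proof.
move=> cbG hu t t0; have [hub hadh _] := supp_facts cbG hu.
rewrite /hausdorff le_max; apply/orP; left.
apply/lee_addgt0Pr => e e0.
set e' := Num.min e t.
have e'0 : 0 < e' by rewrite lt_min e0 t0.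
have e'e : e' <= e by rewrite ge_min lexx.
have e't : e' <= t by rewrite ge_min lexx orbT.
have [a Ga ha] := hadh e' e'0.
have Ca : cap_set G u t a by split => //; lra.
have hd : ((t - e)%:E <= dist_pt a (sect_set G u t))%E.
  apply: le_ereal_inf_tmp => _ [s [Gs hs] <-]; rewrite lee_fin.
  apply: le_trans (cauchy_schwarz _ hu); rewrite dotpBr hs; lra.
apply: (@le_trans _ _ (dist_pt a (sect_set G u t) + e%:E)%E).
  by rewrite -[t in (t%:E <= _)%E](subrK e) EFinD leeD2r.
by rewrite leeD2r //; apply: ereal_sup_ubound; exists a.
Qed.

Lemma part2_bound (R : realType) n (G : set 'rV[R]_n) u x0 D t :
  convex_body G -> enorm u = 1 -> G x0 ->
  0 < support_fun G u - dotp u x0 ->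
  (forall a, G a -> enorm (a - x0) <= D) ->
  0 < t -> t < support_fun G u - dotp u x0 ->
  (hausdorff (cap_set G u t) (sect_set G u t) <=
     (D / (support_fun G u - dotp u x0) * t)%:E)%E.
Proof.
move=> cbG hu Gx0 m0 hD t0 tm; have [hub _ _] := supp_facts cbG hu.
have [cvx _] := cbG.
set h := support_fun G u in m0 tm hub *.
set m := h - dotp u x0 in m0 tm *.
have D0 : 0 <= D by apply: le_trans (hD x0 Gx0); exact: enorm_ge0.
have kt0 : 0 <= D / m * t by rewrite mulr_ge0 ?divr_ge0 // ltW.
rewrite /hausdorff ge_max; apply/andP; split.
  apply: ge_ereal_sup => _ [a [Ga ha] <-].
  set d := dotp u a - dotp u x0.
  have hd1 : m - t <= d by rewrite /d /m /h; lra.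
  have hd2 : d <= m by rewrite /d /m; have := hub a Ga; lra.
  have d0 : 0 < d by lra.
  set l := (m - t) / d.
  have hld : l * d = m - t by rewrite /l divfK // gt_eqF.
  have l0 : 0 <= l by rewrite divr_ge0 // ?ltW //; lra.
  have l1 : l <= 1 by rewrite /l ler_pdivrMr // mul1r.
  have hlm : m - t <= l * m by rewrite -hld; apply: ler_wpM2l.
  have h1l : 1 - l <= t / m by rewrite ler_pdivlMr //; lra.
  set s := l *: a + (1 - l) *: x0.
  have Gs : G s by apply: cvx.
  have hs : dotp u s = h - t.
    rewrite /s dotpDr !dotpZr.
    have -> : l * dotp u a = l * d + l * dotp u x0 by rewrite /d; ring.
    rewrite hld /m; ring.
  apply: ge_ereal_inf; exists (enorm (a - s))%:E; first by exists s => //; split.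
  have -> : a - s = (1 - l) *: (a - x0).
    by apply/rowP => i; rewrite /s !mxE; ring.
  rewrite enormZ ger0_norm ?subr_ge0 // lee_fin.
  apply: (@le_trans _ _ (t / m * D)); last by rewrite le_eqVlt; apply/orP; left; apply/eqP; ring.
  by apply: ler_pM; rewrite ?subr_ge0 ?enorm_ge0 ?hD.
apply: ge_ereal_sup => _ [b [Gb hb] <-]; rewrite -/h in hb.
apply: ge_ereal_inf; exists (enorm (b - b))%:E.
  by exists b => //; split => //; rewrite hb.
by rewrite subrr enorm0 lee_fin.
Qed.

Lemma part2 (R : realType) n (G : set 'rV[R]_n) u :
  convex_body G -> enorm u = 1 ->
  hausdorff (cap_set G u t) (sect_set G u t) @[t --> 0^'+] --> 0%E.
Proof.
move=> cbG hu; have [hub _ [x0 Gx0 hx0]] := supp_facts cbG hu.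
have [Mb hMb] := cb_bounded cbG.
have m0 : 0 < support_fun G u - dotp u x0 by rewrite subr_gt0.
set m := support_fun G u - dotp u x0 in m0 *.
set D := n%:R * (Mb + Mb).
have hD : forall a, G a -> enorm (a - x0) <= D.
  move=> a Ga; apply: (le_trans (enorm_le_mx _)); rewrite ler_wpM2l ?ler0n //.
  apply: (le_trans (ler_mx_norm_add _ _)); rewrite mx_normN.
  by apply: lerD; apply: hMb.
apply: (@squeeze_cvge _ _ _ R (fun _ => 0%E) _ (fun t => (D / m * t)%:E)).
- near=> t.
  have t0 : 0 < t by near: t; exact: nbhs_right_gt.
  have tm : t < m by near: t; exact: nbhs_right_lt.
  apply/andP; split.
    by apply: le_trans (part1 cbG hu t0); rewrite lee_fin ltW.
  exact: part2_bound.
- exact: cvg_cst.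
- apply: cvg_EFin; first by near=> t.
  apply: cvg_at_right_filter => /=.
  rewrite -[X in _ --> X](mulr0 (D / m)).
  by apply: cvgM; [exact: cvg_cst | exact: cvg_id].
Unshelve. all: by end_near.
Qed.

Lemma box_vol_ge0 (R : realType) n (a b : 'rV[R]_n) :
  (forall i, a 0 i <= b 0 i) -> 0 <= box_vol a b.
Proof. by move=> hab; apply: prodr_ge0 => i _; rewrite subr_ge0. Qed.

Lemma vol_ge0 (R : realType) n (A : set 'rV[R]_n) : (0 <= vol A)%E.
Proof.
apply: le_ereal_inf_tmp => _ [ab [hab _] <-].
by apply: nneseries_ge0 => k _ _; rewrite lee_fin box_vol_ge0.
Qed.

Lemma vol_mono (R : realType) n (A B : set 'rV[R]_n) : A `<=` B -> (vol A <= vol B)%E.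
Proof.
move=> AB; apply: ereal_inf_le_tmp => _ [ab [hab hB] <-].
by exists ab => //; split => //; apply: subset_trans hB.
Qed.

Lemma vol_scale2 (R : realType) n (A : set 'rV[R]_n) :
  (vol [set 2 *: x | x in A] <= (2 ^+ n)%:E * vol A)%E.
Proof.
set c : R := 2 ^+ n.
have c0 : 0 < c by rewrite exprn_gt0.
have key : ((c^-1)%:E * vol [set 2 *: x | x in A] <= vol A)%E.
  apply: le_ereal_inf_tmp => _ [ab [hab hA] <-].
  set ab2 := fun k => (2 *: (ab k).1, 2 *: (ab k).2).
  have hab2 : forall k i, (ab2 k).1 0 i <= (ab2 k).2 0 i.
    by move=> k i; rewrite /ab2 /= !mxE ler_wpM2l.
  have cov : [set 2 *: x | x in A] `<=` \bigcup_k box (ab2 k).1 (ab2 k).2.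
    move=> _ [x Ax <-]; have [k _ hk] := hA x Ax; exists k => // i.
    by rewrite /ab2 /= !mxE !ler_wpM2l //; have /andP[] := hk i.
  have hv : forall k, box_vol (ab2 k).1 (ab2 k).2 = c * box_vol (ab k).1 (ab k).2.
    move=> k; rewrite /box_vol /ab2 /=.
    rewrite (eq_bigr (fun i => 2 * ((ab k).2 0 i - (ab k).1 0 i))); last first.
      by move=> i _; rewrite !mxE mulrBr.
    by rewrite big_split /= big_const_ord iter_mulr_1.
  have h1 : (vol [set 2 *: x | x in A] <=
             \sum_(k <oo) (box_vol (ab2 k).1 (ab2 k).2)%:E)%E.
    by apply: ereal_inf_lbound; exists ab2.
  have h2 : (\sum_(k <oo) (box_vol (ab2 k).1 (ab2 k).2)%:E =
             c%:E * \sum_(k <oo) (box_vol (ab k).1 (ab k).2)%:E)%E.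
    rewrite -nneseriesZl; last by move=> k _; rewrite lee_fin box_vol_ge0.
    by apply: eq_eseriesr => k _; rewrite hv EFinM.
  rewrite h2 in h1.
  by rewrite -(@lee_pmul2l _ c%:E) ?lte_fin // muleA -EFinM divff ?gt_eqF // mul1e.
have : ((c%:E * (c^-1)%:E) * vol [set 2 *: x | x in A] <= c%:E * vol A)%E.
  by rewrite -muleA lee_pmul2l ?lte_fin.
by rewrite -EFinM divff ?gt_eqF // mul1e.
Qed.

Lemma vol_union (R : realType) n (A B : set 'rV[R]_n) :
  (vol (A `|` B) <= vol A + vol B)%E.
Proof.
have hA0 := vol_ge0 A; have hB0 := vol_ge0 B.
move: hA0 hB0; case EA: (vol A) => [a| |] //; case EB: (vol B) => [b| |] // => _ _.
apply/lee_addgt0Pr => e e0.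
have e2 : 0 < e / 2 by lra.
have : (vol A < (a + e / 2)%:E)%E by rewrite EA lte_fin ltrDl.
move/ereal_inf_lt => [_ [ca [hca hcovA] <-] hSa].
have : (vol B < (b + e / 2)%:E)%E by rewrite EB lte_fin ltrDl.
move/ereal_inf_lt => [_ [cb [hcb hcovB] <-] hSb].
set c := fun k => if odd k then cb k./2 else ca k./2.
have hc : forall k i, (c k).1 0 i <= (c k).2 0 i by move=> k i; rewrite /c; case: odd.
have cov : A `|` B `<=` \bigcup_k box (c k).1 (c k).2.
  move=> x [/hcovA [k _ hk] | /hcovB [k _ hk]].
    by exists k.*2 => //; rewrite /c odd_double doubleK.
  by exists k.*2.+1 => //; rewrite /c /= odd_double /= uphalf_double.
have h1 : (vol (A `|` B) <= \sum_(k <oo) (box_vol (c k).1 (c k).2)%:E)%E.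
  by apply: ereal_inf_lbound; exists c.
apply: (le_trans h1).
apply: (@le_trans _ _ (\sum_(k <oo) (box_vol (ca k).1 (ca k).2)%:E +
                       \sum_(k <oo) (box_vol (cb k).1 (cb k).2)%:E)%E); last first.
  by apply: le_trans (leeD (ltW hSa) (ltW hSb)) _; rewrite -!EFinD lee_fin; lra.
apply: lime_le.
  by apply: is_cvg_nneseries => k _ _; rewrite lee_fin box_vol_ge0.
apply: nearW => N.
have hdbl : forall M, (\sum_(0 <= k < M.*2) (box_vol (c k).1 (c k).2)%:E =
   \sum_(0 <= k < M) (box_vol (ca k).1 (ca k).2)%:E +
   \sum_(0 <= k < M) (box_vol (cb k).1 (cb k).2)%:E)%E.
  elim=> [|M IH]; first by rewrite !big_geq // adde0.
  rewrite doubleS !big_nat_recr //= IH.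
  rewrite /c /= odd_double /= doubleK uphalf_double.
  by rewrite -addeA addeACA.
apply: (@le_trans _ _ (\sum_(0 <= k < N.*2) (box_vol (c k).1 (c k).2)%:E)%E).
  apply: ereal_nondecreasing_series.
    by move=> k _ _; rewrite lee_fin box_vol_ge0.
  by rewrite -addnn leq_addr.
rewrite hdbl; apply: leeD; apply: nneseries_lim_ge => k _ _; rewrite lee_fin box_vol_ge0 //.
all: by rewrite leey.
Qed.

Lemma part3 (R : realType) n (G : set 'rV[R]_n) u :
  convex_body G -> enorm u = 1 ->
  forall t : R, 0 < t ->
    (vol (minkowski_sum G (cap_set G u t)) - vol (minkowski_sum G (sect_set G u t))
         <= (2 ^+ n)%:E * vol (cap_set G u t))%E.
Proof.
move=> cbG hu t t0; have [cvx _] := cbG.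
set h := support_fun G u.
set C := cap_set G u t; set S := sect_set G u t.
have incl : minkowski_sum G C `<=` minkowski_sum G S `|` [set 2 *: x | x in C].
  move=> _ [g Gg [c [Gc hc] <-]].
  case: (lerP (h - t) (dotp u g)) => hg.
    have q0 : 0 <= 1 / 2 :> R by rewrite divr_ge0.
    have q1 : 1 / 2 <= 1 :> R by rewrite ler_pdivrMr // mul1r ler1n.
    rewrite -/h in hc.
    have hmid : forall l, 0 <= l -> l <= 1 -> h - t <= dotp u (l *: g + (1 - l) *: c).
      by move=> l l0 l1; rewrite dotpDr !dotpZr; nra.
    right; exists ((1/2) *: g + (1 - 1/2) *: c).
      by split; [apply: cvx | apply: hmid].
    by apply/rowP => i; rewrite !mxE; field.
  left; rewrite -/h in hc.
  set d := dotp u c - dotp u g.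
  have d0 : 0 < d by rewrite /d; lra.
  set l := (dotp u c - (h - t)) / d.
  have hld : l * d = dotp u c - (h - t) by rewrite /l divfK // gt_eqF.
  have l0 : 0 <= l by apply: divr_ge0; lra.
  have l1 : l <= 1 by rewrite /l ler_pdivrMr // mul1r /d; lra.
  exists (l *: c + (1 - l) *: g); first by apply: cvx.
  exists (l *: g + (1 - l) *: c).
    split; first by apply: cvx.
    rewrite dotpDr !dotpZr.
    have -> : l * dotp u g = l * dotp u c - l * d by rewrite /d; ring.
    by rewrite hld /h; ring.
  by apply/rowP => i; rewrite !mxE; ring.
have h1 : (vol (minkowski_sum G C) <=
           vol (minkowski_sum G S) + (2 ^+ n)%:E * vol C)%E.
  apply: le_trans (vol_mono incl) _; apply: le_trans (vol_union _ _) _.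
  by apply: leeD => //; exact: vol_scale2.
have := vol_ge0 (minkowski_sum G S).
case E: (vol (minkowski_sum G S)) h1 => [r| |] // h1 _.
  by rewrite leeBlDl.
by rewrite addeNy leNye.
Qed.

Unset Implicit Arguments.
Set Strict Implicit.

Theorem lemma4p2 (R : realType) (n : nat) (G : set 'rV[R]_n) (u : 'rV[R]_n) :
  convex_body G -> enorm u = 1 ->
  [/\ (forall t : R, 0 < t -> (t%:E <= hausdorff (cap_set G u t) (sect_set G u t))%E),
      hausdorff (cap_set G u t) (sect_set G u t) @[t --> 0^'+] --> 0%E
    & (forall t : R, 0 < t ->
        (vol (minkowski_sum G (cap_set G u t)) - vol (minkowski_sum G (sect_set G u t))
         <= (2 ^+ n)%:E * vol (cap_set G u t))%E)].
Proof.
move=> cbG hu; split; [exact: part1 | exact: part2 | exact: part3].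
Qed.
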